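(* Let $\mathbb{F}$ be a finite field of characteristic $2$ and let $\ell,r,h$ be positive integers. Let $S=\{\alpha_{i,s}\}_{i\in[\ell],s\in[r+1]}$ be a multi-set of $\ell(r+1)$ elements of $\mathbb{F}$. Let $\mathcal{C}(S,r,h)\subseteq\mathbb{F}^{\ell(r+1)}$ be the set of vectors $(x_{i,s})_{i\in[\ell],s\in[r+1]}$ satisfying $\sum_{i=1}^{\ell}\sum_{s=1}^{r+1}\alpha_{i,s}^{2^{j-1}}x_{i,s}=0$ for $j=1,\ldots,h$, and $\sum_{s=1}^{r+1}x_{i,s}=0$ for $i=1,\ldots,\ell$. Let ${\bf e}\in[r+1]^\ell$ and let $\mathcal{C}^{-{\bf e}}$ be the code obtained by puncturing $\mathcal{C}(S,r,h)$ in the positions $\{(i,{\bf e}(i))\}_{i=1}^{\ell}$ (i.e. deleting these $\ell$ coordinates). Then $\mathcal{C}^{-{\bf e}}$ is an MDS code with parameters $[\ell r,\ell r-h]$ (i.e. of minimum distance $h+1$) if and only if the multi-set $T(S,{\bf e})=\{\alpha_{i,s}+\alpha_{i,{\bf e}(i)}\}_{i\in[\ell],\,s\in[r+1]\setminus\{{\bf e}(i)\}}$ is $h$-wise independent over $\mathbb{F}_2$.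
   Context: A multi-set $T\subseteq\mathbb{F}$ is $h$-wise independent over $\mathbb{F}_2$ if every sub-multi-set of $T$ of size at most $h$ is linearly independent over $\mathbb{F}_2$. *)

(* Defs.v *)
From HB Require Import structures.
From mathcomp Require Import all_boot all_order all_algebra.
Set Implicit Arguments. Unset Strict Implicit. Unset Printing Implicit Defensive.
Import GRing.Theory.
Local Open Scope ring_scope.

Section Defs.
Variable F : finFieldType.

Definition coord_t (l r : nat) := ('I_l * 'I_r.+1)%type.

(* The code C(S,r,h): alpha i s = alpha_{i,s}; index j : 'I_h stands for j+1. *)
Definition codeC (l r h : nat) (alpha : 'I_l -> 'I_r.+1 -> F)
  : {set {ffun coord_t l r -> F}} :=
  [set x : {ffun coord_t l r -> F} |
     [forall j : 'I_h, \sum_(p : coord_t l r) (alpha p.1 p.2) ^+ (2 ^ j) * x p == 0]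
     && [forall i : 'I_l, \sum_(s : 'I_r.+1) x (i, s) == 0]].

Definition kept_pos (l r : nat) (e : 'I_l -> 'I_r.+1) :=
  {p : coord_t l r | p.2 != e p.1}.

Definition restrict (l r : nat) (e : 'I_l -> 'I_r.+1) (x : {ffun coord_t l r -> F})
  : {ffun kept_pos e -> F} := [ffun p => x (val p)].

Definition punctured (l r : nat) (e : 'I_l -> 'I_r.+1)
  (C : {set {ffun coord_t l r -> F}}) : {set {ffun kept_pos e -> F}} :=
  [set y | [exists x in C, y == restrict e x]].

Definition wt (I : finType) (y : {ffun I -> F}) : nat := #|[set p | y p != 0]|.

(* C is an MDS code [n, n-h] of minimum distance h+1, n = #|I|:
   dimension n - h (i.e. |C| = |F|^(n-h)) and every nonzero codeword has
   weight >= h+1 (Singleton gives equality). *)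
Definition MDS_n_nmh (I : finType) (h : nat) (C : {set {ffun I -> F}}) : Prop :=
  #|C| = (#|F| ^ (#|I| - h))%N /\
  forall c, c \in C -> c != 0 -> (h.+1 <= wt c)%N.

(* The sub-multiset {t p : p in A} is linearly independent over F_2:
   no nontrivial F_2-combination (= sum over a nonempty subfamily) vanishes. *)
Definition F2_indep (I : finType) (t : I -> F) (A : {set I}) : Prop :=
  forall B : {set I}, B \subset A -> B != set0 -> \sum_(p in B) t p != 0.

Definition hwise_indep (I : finType) (h : nat) (t : I -> F) : Prop :=
  forall A : {set I}, (#|A| <= h)%N -> F2_indep t A.

Definition Tse (l r : nat) (alpha : 'I_l -> 'I_r.+1 -> F) (e : 'I_l -> 'I_r.+1)
  (p : kept_pos e) : F :=
  alpha (val p).1 (val p).2 + alpha (val p).1 (e (val p).1).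

End Defs.

(* Main.v *)
Set Warnings "-all".
Require Import Defs.
From HB Require Import structures.
From mathcomp Require Import all_boot all_order all_algebra.
Import GRing.Theory.
Local Open Scope ring_scope.

Section Gen.
Variable F : finFieldType.
Hypothesis char2 : (2 \in [pchar F])%N.

Lemma sqr_sum (I : finType) (P : pred I) (f : I -> F) :
  (\sum_(i | P i) f i) ^+ 2 = \sum_(i | P i) f i ^+ 2.
Proof.
rewrite -(pFrobenius_autE char2 (\sum_(i | P i) f i)) rmorph_sum.
by apply: eq_bigr => i _; exact: pFrobenius_autE.
Qed.

Lemma sqrD (a b : F) : (a + b) ^+ 2 = a ^+ 2 + b ^+ 2.
Proof. by rewrite sqrrD mulr2n addrr_pchar2 ?addr0. Qed.

Lemma pow2D (j : nat) (a b : F) : (a + b) ^+ (2 ^ j) = a ^+ (2 ^ j) + b ^+ (2 ^ j).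
Proof.
elim: j => [|j IH]; first by rewrite expn0 !expr1.
by rewrite expnSr !exprM IH sqrD.
Qed.

Lemma sum_sig (T : finType) (P : pred T) (f : T -> F) :
  \sum_(p : {x | P x}) f (val p) = \sum_(q | P q) f q.
Proof.
rewrite -[RHS]big_filter.
transitivity (\sum_(q <- map val (enum {: {x | P x}})) f q).
  by rewrite big_map big_enum.
apply: perm_big; apply: uniq_perm.
- by rewrite (map_inj_uniq val_inj) enum_uniq.
- by rewrite filter_uniq // /index_enum -enumT enum_uniq.
move=> q; rewrite mem_filter /index_enum -enumT mem_enum andbT.
apply/mapP/idP => [[p _ ->]|Pq]; first exact: (valP p).
by exists (exist _ q Pq); rewrite ?mem_enum.
Qed.

Lemma moore (I : finType) (k : nat) : forall (t c : I -> F),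
  leq #|[set p | c p != 0]| k -> (exists p, c p != 0) ->
  (forall j, (j < k)%N -> \sum_p c p * t p ^+ (2 ^ j) = 0) ->
  exists B : {set I}, [/\ B \subset [set p | c p != 0], B != set0 &
                         \sum_(p in B) t p = 0].
Proof.
elim: k => [|k IH] t c hS [p1 hp1] heq.
  have : p1 \in [set p | c p != 0] by rewrite inE.
  by move: hS; rewrite leqn0 cards_eq0 => /eqP ->; rewrite inE.
set S := [set p | c p != 0].
have [Hall|] := boolP [forall p, (c p == 0) || (c p == c p1)].
  exists S; split => //.
    by apply/set0Pn; exists p1; rewrite inE.
  have := heq 0%N isT; rewrite expn0.
  rewrite (bigID (fun p => p \in S)) /= [X in _ + X]big1 ?addr0; last first.
    by move=> p; rewrite inE negbK => /eqP ->; rewrite mul0r.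
  rewrite (eq_bigr (fun p => c p1 * t p)); last first.
    move=> p; rewrite inE => hp; move/forallP: Hall => /(_ p).
    by rewrite (negbTE hp) /= => /eqP ->; rewrite expr1.
  by rewrite -mulr_sumr => /eqP; rewrite mulf_eq0 (negbTE hp1) /= => /eqP.
rewrite negb_forall => /existsP [p2]; rewrite negb_or => /andP [hp2a hp2b].
set d := fun p => c p * (c p - c p1).
have hd : forall p, d p != 0 -> p \in S :\ p1.
  move=> p; rewrite /d mulf_eq0 negb_or subr_eq0 => /andP [h1 h2].
  by rewrite !inE h1 andbT; apply: contra h2 => /eqP ->.
have hS' : leq #|[set p | d p != 0]| k.
  apply: leq_trans (_ : #|S :\ p1| <= k)%N.
    by apply: subset_leq_card; apply/subsetP => p; rewrite inE; apply: hd.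
  rewrite (cardsD1 p1 S) inE hp1 /= add1n in hS.
  by rewrite -ltnS.
have hex : exists p, d p != 0 by exists p2; rewrite /d mulf_neq0 // subr_eq0.
have heq' : forall j, (j < k)%N -> \sum_p d p * (t p ^+ 2) ^+ (2 ^ j) = 0.
  move=> j hj.
  have e1 := heq j.+1 hj.
  have e0 := heq j (ltnW hj).
  have : (\sum_p c p * t p ^+ (2 ^ j)) ^+ 2 - c p1 * \sum_p c p * t p ^+ (2 ^ j.+1) = 0.
    by rewrite e0 e1 expr0n mulr0 subr0.
  rewrite sqr_sum mulr_sumr -sumrB => H; apply: (etrans _ H); apply: eq_bigr => p _.
  rewrite /d -exprM -expnS exprMn -exprM mulnC -expnS.
  by rewrite expr2 mulrBr mulrBl [c p * c p1]mulrC mulrA.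
have [B [BS Bn0 HB]] := IH (fun p => t p ^+ 2) d hS' hex heq'.
exists B; split => //.
    apply: subset_trans BS _; apply/subsetP => p; rewrite inE => /hd.
    by rewrite !inE => /andP [].
  by apply/eqP; move: HB; rewrite -sqr_sum => /eqP; rewrite expf_eq0.
Qed.

Variables (l r h : nat) (alpha : 'I_l -> 'I_r.+1 -> F) (e : 'I_l -> 'I_r.+1).
Local Notation I := (kept_pos e).
Local Notation t := (@Tse F l r alpha e).

Definition Hm (y : {ffun I -> F}) : {ffun 'I_h -> F} :=
  [ffun j : 'I_h => \sum_p t p ^+ (2 ^ j) * y p].
Definition K := [set y | Hm y == 0].

Lemma inK y : (y \in K) = [forall j : 'I_h, \sum_p t p ^+ (2 ^ j) * y p == 0].
Proof.
rewrite inE; apply/eqP/forallP => [H j|H].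
  by have := congr1 (fun f : {ffun 'I_h -> F} => f j) H; rewrite !ffunE => ->.
by apply/ffunP => j; rewrite !ffunE; apply/eqP.
Qed.

Lemma key (x : {ffun coord_t l r -> F}) (N : nat) :
  (forall i, \sum_s x (i, s) = 0) -> (exists j, N = 2 ^ j)%N ->
  \sum_(q : coord_t l r) alpha q.1 q.2 ^+ N * x q = \sum_(p : I) t p ^+ N * x (val p).
Proof.
move=> hx [j ->].
rewrite (@sum_sig _ (fun q : coord_t l r => q.2 != e q.1)
   (fun q => (alpha q.1 q.2 + alpha q.1 (e q.1)) ^+ (2 ^ j) * x q)).
have -> : \sum_(q : coord_t l r) alpha q.1 q.2 ^+ (2 ^ j) * x q =
    \sum_i \sum_s alpha i s ^+ (2 ^ j) * x (i, s).
  by rewrite pair_big; apply: eq_bigr => -[i s].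
have -> : \sum_(q : coord_t l r | q.2 != e q.1) (alpha q.1 q.2 + alpha q.1 (e q.1)) ^+ (2 ^ j) * x q =
    \sum_i \sum_(s | s != e i) (alpha i s + alpha i (e i)) ^+ (2 ^ j) * x (i, s).
  by rewrite pair_big_dep; apply: eq_big => -[i s].
apply: eq_bigr => i _.
rewrite (bigD1 (e i)) //=.
under [RHS]eq_bigr do rewrite pow2D mulrDl.
rewrite big_split /= -mulr_sumr addrC.
congr (_ + _ * _).
have := hx i; rewrite (bigD1 (e i)) //= => /eqP; rewrite addr_eq0 => /eqP ->.
by rewrite oppr_pchar2.
Qed.

Lemma punctK : punctured e (codeC h alpha) = K.
Proof.
apply/setP => y; rewrite inE inK; apply/existsP/forallP.
  move=> [x /andP [xC /eqP ->]] j.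
  move: xC; rewrite inE => /andP [/forallP Hj /forallP Hi].
  have hx : forall i, \sum_s x (i, s) = 0 by move=> i; apply/eqP; exact: Hi.
  under eq_bigr do rewrite ffunE.
  by rewrite -key //; exists (nat_of_ord j).
move=> Hy.
pose yfull (q : coord_t l r) : F :=
  if (insub q : option I) is Some p then y p else 0.
have yv : forall p : I, yfull (val p) = y p by move=> p; rewrite /yfull valK.
have ye : forall i, yfull (i, e i) = 0.
  by move=> i; rewrite /yfull insubF //= eqxx.
pose x := [ffun q : coord_t l r =>
  if q.2 == e q.1 then \sum_s yfull (q.1, s) else yfull q].
have hx : forall i, \sum_s x (i, s) = 0.
  move=> i; rewrite (bigD1 (e i)) //= ffunE /= eqxx.
  rewrite [X in _ + X](eq_bigr (fun s => yfull (i, s))); last first.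
    by move=> s hs; rewrite ffunE /= (negbTE hs).
  by rewrite (bigD1 (e i)) //= ye add0r addrr_pchar2.
have xr : restrict e x = y.
  apply/ffunP => p; rewrite !ffunE.
  by rewrite (negbTE (valP p)) yv.
exists x; rewrite xr eqxx andbT inE; apply/andP; split; last first.
  by apply/forallP => i; rewrite hx.
apply/forallP => j; rewrite key //; last by exists (nat_of_ord j).
rewrite (eq_bigr (fun p => t p ^+ (2 ^ j) * y p)); first exact: Hy.
by move=> p _; congr (_ * _); rewrite -[in RHS]xr /restrict [RHS]ffunE.
Qed.

Lemma HmB y z : Hm (y - z) = Hm y - Hm z.
Proof.
apply/ffunP => j; rewrite !ffunE -sumrB; apply: eq_bigr => p _.
by rewrite !ffunE mulrBr.
Qed.

Lemma KB y z : y \in K -> z \in K -> y - z \in K.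
Proof. by rewrite !inE HmB => /eqP -> /eqP ->; rewrite subrr. Qed.

Lemma K0 : 0 \in K.
Proof. by rewrite inE; apply/eqP/ffunP => j; rewrite !ffunE big1 // => p _; rewrite ffunE mulr0. Qed.

Lemma nz_ex (y : {ffun I -> F}) : y != 0 -> exists p, y p != 0.
Proof.
move=> ynz; apply/existsP; move: ynz; apply: contraR; rewrite negb_exists => /forallP H.
by apply/eqP/ffunP => p; rewrite ffunE; apply/eqP; have := H p; rewrite negbK.
Qed.

Lemma mooreK y : y \in K -> y != 0 -> (wt y <= h)%N ->
  exists B : {set I}, [/\ B \subset [set p | y p != 0], B != set0 &
                         \sum_(p in B) t p = 0].
Proof.
move=> yK ynz hw; apply: (@moore _ _ t (fun p => y p) hw (nz_ex _ ynz)).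
move=> j hj; move: yK; rewrite inK => /forallP /(_ (Ordinal hj)) /eqP /= H; apply: etrans H.
by apply: eq_bigr => p _; rewrite mulrC.
Qed.

Definition ind (B : {set I}) : {ffun I -> F} := [ffun p => if p \in B then 1 else 0].

Lemma indK (B : {set I}) : \sum_(p in B) t p = 0 -> ind B \in K.
Proof.
move=> HB; rewrite inK; apply/forallP => j.
rewrite (bigID (fun p => p \in B)) /= [X in _ + X]big1 ?addr0; last first.
  by move=> p hp; rewrite ffunE (negbTE hp) mulr0.
rewrite (eq_bigr (fun p => t p ^+ (2 ^ j))); last by move=> p hp; rewrite ffunE hp mulr1.
have pw : forall n : nat, (\sum_(p in B) t p ^+ (2 ^ n)) = (\sum_(p in B) t p) ^+ (2 ^ n).
  elim=> [|n IH]; first by apply: eq_bigr => p _; rewrite !expn0 !expr1.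
  rewrite expnSr !exprM -IH sqr_sum.
  by apply: eq_bigr => p _; rewrite exprM.
by rewrite pw HB expr0n expn_eq0.
Qed.

Lemma wt_ind (B : {set I}) : wt (ind B) = #|B|.
Proof.
by rewrite /wt; apply: eq_card => p; rewrite inE ffunE; case: (p \in B); rewrite ?oner_eq0 ?eqxx.
Qed.

Lemma ind_nz (B : {set I}) : B != set0 -> ind B != 0.
Proof.
case/set0Pn => p hp; apply/eqP => /ffunP /(_ p); rewrite !ffunE hp => /eqP.
by rewrite oner_eq0.
Qed.

Lemma card_K : (forall c, c \in K -> c != 0 -> (h < wt c)%N) ->
  #|K| = (#|F| ^ (#|{: I}| - h))%N.
Proof.
move=> Hw.
have wtI : forall c : {ffun I -> F}, (wt c <= #|{: I}|)%N by move=> c; exact: max_card.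
have hF : (0 < #|F|)%N by apply/card_gt0P; exists 0.
case: (leqP #|{: I}| h) => hn.
  have -> : (#|{: I}| - h = 0)%N by apply/eqP; rewrite subn_eq0.
  have -> : K = [set (0 : {ffun I -> F})].
    apply/setP => y; rewrite inE; apply/idP/eqP => [yK|->]; last exact: K0.
    apply/eqP; apply: contraT => ynz; have := Hw y yK ynz.
    by rewrite ltnNge (leq_trans (wtI y) hn).
  by rewrite cards1.
have [A cA] : exists A : {set I}, #|A| = h.
  exists [set x in take h (enum {: I})].
  rewrite cardsE (card_uniqP _) ?size_take -?cardE ?hn //.
  by apply: take_uniq; exact: enum_uniq.
pose rho (y : {ffun I -> F}) : {ffun {p : I | p \notin A} -> F} := [ffun q => y (val q)].
have inj : {in K &, injective rho}.
  move=> y z yK zK hyz; apply/eqP; rewrite -subr_eq0; apply: contraT => nz.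
  have := Hw _ (KB _ _ yK zK) nz; rewrite ltnNge => /negP H; exfalso; apply: H.
  apply: (@leq_trans #|A|); last by rewrite cA.
  apply: subset_leq_card; apply/subsetP => p; rewrite inE.
  apply: contraR => hp.
  move: (congr1 (fun f : {ffun {p : I | p \notin A} -> F} => f (exist _ p hp)) hyz) => E.
  rewrite /rho [in LHS]ffunE [in RHS]ffunE /= in E.
  by rewrite [(y - z) p]ffunE E [(- z) p]ffunE subrr.
have up : (#|K| <= #|F| ^ (#|{: I}| - h))%N.
  rewrite -(card_in_imset inj); apply: leq_trans (max_card _) _.
  rewrite card_ffun card_sig.
  have -> : #|[pred x | x \notin A]| = (#|{: I}| - h)%N.
    by rewrite -(cardC A) cA addKn; apply: eq_card.
  by [].
pose rep (v : {ffun 'I_h -> F}) : {ffun I -> F} := odflt 0 [pick z | Hm z == v].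
pose f y := (Hm y, y - rep (Hm y)).
have finj : injective f.
  move=> y z [E1 E2]; rewrite E1 in E2; exact: (addIr _ E2).
have fK : forall y, y - rep (Hm y) \in K.
  move=> y; rewrite inE HmB /rep; case: pickP => [z /eqP ->|H].
    by rewrite subrr.
  by have := H y; rewrite eqxx.
have lo : (#|F| ^ #|{: I}| <= #|F| ^ h * #|K|)%N.
  rewrite -card_ffun -cardsT -(card_imset _ finj).
  apply: leq_trans (subset_leq_card (_ : f @: setT \subset setX setT K)) _.
    by apply/subsetP => w /imsetP [y _ ->]; rewrite inE /= in_setT fK.
  by rewrite cardsX cardsT card_ffun card_ord.
apply/eqP; rewrite eqn_leq up andTb.
rewrite -(@leq_pmul2l (#|F| ^ h)); last by rewrite expn_gt0 hF.
by rewrite -expnD subnKC // ltnW.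
Qed.

Lemma main : MDS_n_nmh h (punctured e (codeC h alpha)) <-> hwise_indep h t.
Proof.
rewrite punctK; split.
  move=> [_ Hw] A hA B BA Bn0; apply/eqP => Hs.
  have := Hw _ (indK _ Hs) (ind_nz _ Bn0).
  by rewrite wt_ind ltnNge (leq_trans (subset_leq_card BA) hA).
move=> Hi.
have Hw : forall c, c \in K -> c != 0 -> (h < wt c)%N.
  move=> c cK cnz; rewrite ltnNge; apply/negP => hc.
  have [B [BS Bn0 HB]] := mooreK _ cK cnz hc.
  by have := Hi _ hc B BS Bn0; rewrite HB eqxx.
by split; [exact: card_K | exact: Hw].
Qed.

End Gen.

Theorem proposition10 (F : finFieldType) (char2 : (2 \in [pchar F])%N)
  (l r h : nat) (hl : (0 < l)%N) (hr : (0 < r)%N) (hh : (0 < h)%N)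
  (alpha : 'I_l -> 'I_r.+1 -> F) (e : 'I_l -> 'I_r.+1) :
  @MDS_n_nmh F (kept_pos e) h (@punctured F l r e (@codeC F l r h alpha))
  <-> @hwise_indep F (kept_pos e) h (@Tse F l r alpha e).
Proof. exact: main. Qed.
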